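(* Let $N=\{1,\dots,n\}$, let $\tilde Q\in\mathbb{R}^{n\times n}$ be symmetric positive definite with smallest eigenvalue $\mu>0$ and spectral norm $\|\tilde Q\|$, $\tilde d\in\mathbb{R}^n$, and $a,b\in\mathbb{R}^n$ with $b\le a$ componentwise. Let $A,B\subseteq N$ be disjoint, $I=N\setminus(A\cup B)$, and let $(x,s,t)$ be the KKT solution for $(A,B)$. Let $C=\{i: x_i<b_i \text{ or } s_i<0\}$, $D=\{i: x_i>a_i \text{ or } t_i>0\}$, and let $(y,u,v)$ be the KKT solution for $(C,D)$. Define $S=\{i\in A: s_i\ge0\}$, $T=\{i\in B: t_i\le 0\}$, $U=\{i\in I: x_i<b_i\}$, $V=\{i\in I: x_i>a_i\}$, $W=U\cup V$, $\overline W=N\setminus W$, $R=I\setminus W$, $K=\{i\in S\cup T\cup R: y_i<b_i\}$, $L=\{i\in S\cup T\cup R: y_i>a_i\}$ and $z=y-x$. Then for all $c,d\ge 0$, $$2\big(L_{c,d}(y,u,v)-L_{c,d}(x,s,t)\big)\le\|\tilde Q\|\,\|z_W\|^2-\mu\|z_{\overline W}\|^2+c\|z_K\|^2+d\|z_L\|^2-c\|z_U\|^2-d\|z_V\|^2.$$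
   Context: For disjoint $A_1,A_2\subseteq N$, the KKT solution for $(A_1,A_2)$ is the unique triple $(x,s,t)\in(\mathbb{R}^n)^3$ with $x_{A_1}=b_{A_1}$, $x_{A_2}=a_{A_2}$, $s_i=0$ for $i\notin A_1$, $t_i=0$ for $i\notin A_2$, and $\tilde Qx+\tilde d+s+t=0$. The merit function is $L_{c,d}(x,s,t)=\tilde J(x)+\frac c2\|g(x)\|^2+\frac d2\|h(x)\|^2$ with $\tilde J(x)=\tfrac12x^{\top}\tilde Qx+\tilde d^{\top}x$, $g(x)=\max(b-x,0)$, $h(x)=\max(x-a,0)$ componentwise. For $M\subseteq N$, $z_M$ is the subvector of $z$ indexed by $M$; $\|\cdot\|$ is the Euclidean norm. *)

(* Defs.v *)
From HB Require Import structures.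
From mathcomp Require Import all_boot all_order all_algebra.
From mathcomp Require Import classical_sets reals.
Set Implicit Arguments. Unset Strict Implicit. Unset Printing Implicit Defensive.
Import Order.TTheory GRing.Theory Num.Theory.
Local Open Scope ring_scope.
Local Open Scope classical_set_scope.

Section Defs.
Variables (R : realType) (n : nat).
Implicit Types (x z : 'cV[R]_n) (M : {set 'I_n}) (Q : 'M[R]_n).

Definition subnorm M z : R := Num.sqrt (\sum_(i in M) z i 0 ^+ 2).
Definition enorm z : R := subnorm [set: 'I_n] z.

Definition spectral_norm Q : R :=
  sup [set enorm (Q *m x) | x in [set x | enorm x = 1]].

Definition is_symmetric Q := Q^T = Q.
Definition is_posdef Q := forall x, x != 0 -> 0 < (x^T *m Q *m x) 0 0.

Definition smallest_eigenvalue Q (mu : R) :=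
  eigenvalue Q mu /\ forall l, eigenvalue Q l -> mu <= l.

Definition is_KKT Q (dt : 'cV[R]_n) (a b : 'cV[R]_n) (A1 A2 : {set 'I_n})
  (x s t : 'cV[R]_n) :=
  [/\ forall i, i \in A1 -> x i 0 = b i 0,
      forall i, i \in A2 -> x i 0 = a i 0,
      forall i, i \notin A1 -> s i 0 = 0,
      forall i, i \notin A2 -> t i 0 = 0 &
      Q *m x + dt + s + t = 0].

Definition Jt Q (dt x : 'cV[R]_n) : R :=
  (x^T *m Q *m x) 0 0 / 2 + (dt^T *m x) 0 0.
Definition gfun (b x : 'cV[R]_n) : 'cV[R]_n := \col_i Num.max (b i 0 - x i 0) 0.
Definition hfun (a x : 'cV[R]_n) : 'cV[R]_n := \col_i Num.max (x i 0 - a i 0) 0.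

(* merit function L_{c,d}(x,s,t) (it does not depend on s,t) *)
Definition Lcd Q (dt a b : 'cV[R]_n) (c d : R) (x s t : 'cV[R]_n) : R :=
  Jt Q dt x + c / 2 * enorm (gfun b x) ^+ 2 + d / 2 * enorm (hfun a x) ^+ 2.

End Defs.

(* Main.v *)
Require Import Defs.
From HB Require Import structures.
From mathcomp Require Import all_boot all_order all_algebra.
From mathcomp Require Import classical_sets reals.
From mathcomp Require Import ring lra.
Import Order.TTheory GRing.Theory Num.Theory.
Local Open Scope ring_scope.

Set Implicit Arguments. Unset Strict Implicit. Unset Printing Implicit Defensive.

Ltac spec_all := repeat match goal with
  | H : is_true true -> _ |- _ => specialize (H isT)
  | H : is_true false -> _ |- _ => clear H
  end.

Lemma sq_le1 (R : realType) (xi bi yi : R) : yi < bi -> bi <= xi -> (bi - yi) ^+2 <= (yi - xi) ^+ 2.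
Proof. move=> h1 h2. nra. Qed.
Lemma sq_le2 (R : realType) (xi ai yi : R) : ai < yi -> xi <= ai -> (yi - ai) ^+2 <= (yi - xi) ^+ 2.
Proof. move=> h1 h2. nra. Qed.

Section Scalar.
Variable R : realType.
Variables (iA iB : bool) (xi si ti yi ui vi ai bi : R).
Hypotheses (hba : bi <= ai) (hAB : ~~ (iA && iB))
  (hxA : iA -> xi = bi) (hxB : iB -> xi = ai) (hsA : ~~ iA -> si = 0) (htB : ~~ iB -> ti = 0)
  (hyC : (xi < bi) || (si < 0) -> yi = bi) (hyD : (ai < xi) || (0 < ti) -> yi = ai)
  (huC : ~~ ((xi < bi) || (si < 0)) -> ui = 0) (hvD : ~~ ((ai < xi) || (0 < ti)) -> vi = 0).
Let iI := ~~ (iA || iB).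
Let iS := iA && (0 <= si).
Let iT := iB && (ti <= 0).
Let iU := iI && (xi < bi).
Let iV := iI && (ai < xi).
Let iW := iU || iV.
Let iR := ~~ iW && iI.
Let iK := (iS || iT || iR) && (yi < bi).
Let iL := (iS || iT || iR) && (ai < yi).

Lemma K1 : iW -> si = 0 /\ ti = 0.
Proof using hba hAB hxA hxB hsA htB hyC hyD huC hvD.
rewrite /iW /iU /iV /iI; case: iA iB hAB hsA htB => [] [] //= _ h1 h2 _.
by rewrite h1 ?h2.
Qed.

Lemma K2 : ~~ iW -> yi = xi \/ (ui = 0 /\ vi = 0).
Proof using hba hAB hxA hxB hsA htB hyC hyD huC hvD.
move: hba hxA hxB hsA htB hyC hyD huC hvD.
rewrite /iW /iU /iV /iI; case: iA iB hAB => [] [] //= _;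
case: (ltrP xi bi); case: (ltrP ai xi); case: (ltrP si 0); case: (ltrP 0 ti) => //=;
move=> *; spec_all;  try (left; lra); try (right; lra); try (exfalso; lra).
Qed.

Lemma K3a : iU -> yi = bi /\ xi < bi.
Proof using hba hAB hxA hxB hsA htB hyC hyD huC hvD.
move: hba hxA hxB hsA htB hyC hyD huC hvD.
rewrite /iU /iI; case: iA iB hAB => [] [] //= _;
case: (ltrP xi bi) => //=;
move=> *; spec_all; try (split; lra); try lra; exfalso; lra.
Qed.

Lemma K3b : ~~ iU -> bi <= xi.
Proof using hba hAB hxA hxB hsA htB hyC hyD huC hvD.
move: hba hxA hxB hsA htB hyC hyD huC hvD.
rewrite /iU /iI; case: iA iB hAB => [] [] //= _;
case: (ltrP xi bi) => //=;
move=> *; spec_all; try (split; lra); try lra; exfalso; lra.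
Qed.

Lemma K4a : iV -> yi = ai /\ ai < xi.
Proof using hba hAB hxA hxB hsA htB hyC hyD huC hvD.
move: hba hxA hxB hsA htB hyC hyD huC hvD.
rewrite /iV /iI; case: iA iB hAB => [] [] //= _;
case: (ltrP ai xi) => //=;
move=> *; spec_all; try (split; lra); try lra; exfalso; lra.
Qed.

Lemma K4b : ~~ iV -> xi <= ai.
Proof using hba hAB hxA hxB hsA htB hyC hyD huC hvD.
move: hba hxA hxB hsA htB hyC hyD huC hvD.
rewrite /iV /iI; case: iA iB hAB => [] [] //= _;
case: (ltrP ai xi) => //=;
move=> *; spec_all; try (split; lra); try lra; exfalso; lra.
Qed.

Lemma K5a : iK -> yi < bi /\ bi <= xi.
Proof using hba hAB hxA hxB hsA htB hyC hyD huC hvD.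
move: hba hxA hxB hsA htB hyC hyD huC hvD.
rewrite /iK /iS /iT /iR /iW /iU /iV /iI; case: iA iB hAB => [] [] //= _;
case: (ltrP xi bi); case: (ltrP ai xi); case: (ltrP si 0); case: (ltrP 0 ti); case: (ltrP yi bi) => //=;
move=> *; spec_all; try (split; lra); try lra; exfalso; lra.
Qed.

Lemma K5b : ~~ iK -> bi <= yi.
Proof using hba hAB hxA hxB hsA htB hyC hyD huC hvD.
move: hba hxA hxB hsA htB hyC hyD huC hvD.
rewrite /iK /iS /iT /iR /iW /iU /iV /iI; case: iA iB hAB => [] [] //= _;
case: (ltrP xi bi); case: (ltrP ai xi); case: (ltrP si 0); case: (ltrP 0 ti); case: (ltrP yi bi) => //=;
move=> *; spec_all; try (split; lra); try lra; exfalso; lra.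
Qed.

Lemma K6a : iL -> ai < yi /\ xi <= ai.
Proof using hba hAB hxA hxB hsA htB hyC hyD huC hvD.
move: hba hxA hxB hsA htB hyC hyD huC hvD.
rewrite /iL /iS /iT /iR /iW /iU /iV /iI; case: iA iB hAB => [] [] //= _;
case: (ltrP xi bi); case: (ltrP ai xi); case: (ltrP si 0); case: (ltrP 0 ti); case: (ltrP ai yi) => //=;
move=> *; spec_all; try (split; lra); try lra; exfalso; lra.
Qed.

Lemma K6b : ~~ iL -> yi <= ai.
Proof using hba hAB hxA hxB hsA htB hyC hyD huC hvD.
move: hba hxA hxB hsA htB hyC hyD huC hvD.
rewrite /iL /iS /iT /iR /iW /iU /iV /iI; case: iA iB hAB => [] [] //= _;
case: (ltrP xi bi); case: (ltrP ai xi); case: (ltrP si 0); case: (ltrP 0 ti); case: (ltrP ai yi) => //=;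
move=> *; spec_all; try (split; lra); try lra; exfalso; lra.
Qed.

Lemma P3 : Num.max (bi - xi) 0 ^+ 2 = (if iU then (yi - xi) ^+ 2 else 0).
Proof using hba hAB hxA hxB hsA htB hyC hyD huC hvD.
case hU: iU.
  have [-> hx] := K3a hU. by rewrite max_l // subr_ge0 ltW.
have h := K3b (negbT hU). by rewrite max_r ?expr0n // subr_le0.
Qed.

Lemma P4 : Num.max (xi - ai) 0 ^+ 2 = (if iV then (yi - xi) ^+ 2 else 0).
Proof using hba hAB hxA hxB hsA htB hyC hyD huC hvD.
case hV: iV.
  have [-> hx] := K4a hV. rewrite max_l ?subr_ge0 ?ltW //.
  by rewrite -sqrrN opprB.
have h := K4b (negbT hV). by rewrite max_r ?expr0n // subr_le0.
Qed.

Lemma P5 : Num.max (bi - yi) 0 ^+ 2 <= (if iK then (yi - xi) ^+ 2 else 0).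
Proof using hba hAB hxA hxB hsA htB hyC hyD huC hvD.
case hK: iK.
  have [h1 h2] := K5a hK. rewrite max_l; last by rewrite subr_ge0 ltW.
  exact: sq_le1.
have h := K5b (negbT hK). by rewrite max_r ?expr0n // subr_le0.
Qed.

Lemma P6 : Num.max (yi - ai) 0 ^+ 2 <= (if iL then (yi - xi) ^+ 2 else 0).
Proof using hba hAB hxA hxB hsA htB hyC hyD huC hvD.
case hL: iL.
  have [h1 h2] := K6a hL. rewrite max_l; last by rewrite subr_ge0 ltW.
  exact: sq_le2.
have h := K6b (negbT hL). by rewrite max_r ?expr0n // subr_le0.
Qed.

End Scalar.


Lemma disc (R : realType) (a b c : R) :
  (forall t, 0 <= a + 2 * t * b + t ^+ 2 * c) -> 0 <= c -> b ^+ 2 <= a * c.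
Proof.
move=> H hc; rewrite le_eqVlt eq_sym in hc; case/orP: hc => [/eqP c0|cpos].
  have [b0|bn0] := eqVneq b 0.
    by rewrite b0 c0 expr0n mulr0.
  have := H (- (a + 1) / (2 * b)).
  have -> : a + 2 * (- (a + 1) / (2 * b)) * b + (- (a + 1) / (2 * b)) ^+ 2 * c = -1.
    rewrite c0 mulr0 addr0; field; by rewrite bn0.
  lra.
have := H (- b / c).
have -> : a + 2 * (- b / c) * b + (- b / c) ^+ 2 * c = (a * c - b ^+ 2) / c.
  field; by rewrite gt_eqF.
move=> h; have : 0 <= (a * c - b ^+ 2) / c * c by apply: mulr_ge0 => //; exact: ltW.
rewrite divfK ?gt_eqF //; lra.
Qed.

Section LA.
Variables (R : realType) (n : nat).
Implicit Types (p q r : 'cV[R]_n) (P : 'M[R]_n).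

Definition nrm2 p : R := \sum_i p i 0 ^+ 2.
Definition form P p r : R := (p^T *m P *m r) 0 0.

Lemma formE P p r : form P p r = \sum_i p i 0 * (P *m r) i 0.
Proof. rewrite /form -mulmxA mxE; apply: eq_bigr => i _; by rewrite mxE. Qed.

Lemma form_sym P p r : P^T = P -> form P p r = form P r p.
Proof.
move=> hP; rewrite /form.
transitivity ((p^T *m P *m r)^T 0 0); first by rewrite [RHS]mxE.
by rewrite !trmx_mul trmxK hP mulmxA.
Qed.

Lemma formDl P p q r : form P (p + q) r = form P p r + form P q r.
Proof. by rewrite /form linearD /= !mulmxDl mxE. Qed.
Lemma formDr P p q r : form P r (p + q) = form P r p + form P r q.
Proof. by rewrite /form !mulmxDr mxE. Qed.
Lemma formZl P k p r : form P (k *: p) r = k * form P p r.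
Proof. by rewrite /form linearZ /= -!scalemxAl mxE. Qed.
Lemma formZr P k p r : form P r (k *: p) = k * form P r p.
Proof. by rewrite /form -!scalemxAr mxE. Qed.

Lemma form1 p : form 1%:M p p = nrm2 p.
Proof. rewrite formE; apply: eq_bigr => i _; by rewrite mul1mx expr2. Qed.

Lemma nrm2_ge0 p : 0 <= nrm2 p.
Proof. apply: sumr_ge0 => i _; exact: sqr_ge0. Qed.

Lemma nrm2_entry p i : p i 0 ^+ 2 <= nrm2 p.
Proof.
rewrite /nrm2 (bigD1 i) //= lerDl; apply: sumr_ge0 => j _; exact: sqr_ge0.
Qed.

Lemma nrm2Z k p : nrm2 (k *: p) = k ^+ 2 * nrm2 p.
Proof. rewrite /nrm2 mulr_sumr; apply: eq_bigr => i _; by rewrite mxE exprMn. Qed.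

Lemma CS_psd P p r : P^T = P -> (forall q, 0 <= form P q q) ->
  form P p r ^+ 2 <= form P p p * form P r r.
Proof.
move=> hP hpsd; apply: disc; last exact: hpsd.
move=> t; have := hpsd (p + t *: r).
rewrite !formDl !formDr !formZl !formZr (form_sym r p hP).
by congr (0 <= _); rewrite expr2; ring.
Qed.

End LA.

Lemma abs_le1 (R : realType) (a : R) : a ^+ 2 <= 1 -> `|a| <= 1.
Proof. rewrite -real_normK ?num_real // => h. have := normr_ge0 a. nra. Qed.
Lemma sq_le_abs (R : realType) (a c : R) : `|a| <= c -> a ^+ 2 <= c ^+ 2.
Proof. rewrite -real_normK ?num_real // => h. have := normr_ge0 a. nra. Qed.
Lemma prod_bound (R : realType) (a b c N : R) : a ^+ 2 <= N -> b ^+ 2 <= N ->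
  c * (a * b) <= `|c| * N.
Proof.
move=> ha hb.
have hab : `|a * b| <= N.
  rewrite normrM. rewrite -real_normK ?num_real // in ha.
  rewrite -real_normK ?num_real // in hb.
  have := normr_ge0 a; have := normr_ge0 b. nra.
apply: le_trans (ler_norm _) _. rewrite normrM. apply: ler_wpM2l => //.
Qed.

Section Spec.
Variables (R : realType) (n : nat).
Implicit Types (p q : 'cV[R]_n) (Q : 'M[R]_n).

Lemma enormE p : enorm p = Num.sqrt (nrm2 p).
Proof. rewrite /enorm /subnorm /nrm2; congr Num.sqrt; apply: eq_bigl => i; by rewrite !inE. Qed.

Lemma spec_has_sup Q p : enorm p = 1 ->
  has_sup [set enorm (Q *m x) | x in [set x | enorm x = 1]]%classic.
Proof.
move=> hp; split; first by exists (enorm (Q *m p)), p.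
exists (Num.sqrt (\sum_i (\sum_j `|Q i j|) ^+ 2)) => y [x /= hx <-].
rewrite enormE; apply: ler_wsqrtr; apply: ler_sum => i _.
have hx1 : nrm2 x = 1 by rewrite -(sqr_sqrtr (nrm2_ge0 x)) -enormE hx expr1n.
apply: sq_le_abs; rewrite mxE; apply: le_trans (ler_norm_sum _ _ _) _.
apply: ler_sum => j _; rewrite normrM -{2}(mulr1 `|Q i j|); apply: ler_wpM2l => //.
apply: abs_le1; rewrite -hx1; exact: nrm2_entry.
Qed.

Lemma spec_bound Q p : form Q p p <= spectral_norm Q * nrm2 p.
Proof.
set Qp := Q *m p.
have cs : form Q p p ^+ 2 <= nrm2 p * nrm2 Qp.
  have psd1 : forall q : 'cV[R]_n, 0 <= form 1%:M q q by move=> q; rewrite form1 nrm2_ge0.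
  have h := @CS_psd R n 1%:M p Qp (trmx1 _ _) psd1.
  by rewrite !form1 {1}/form mulmx1 mulmxA in h.
have h1 : form Q p p <= Num.sqrt (nrm2 p) * Num.sqrt (nrm2 Qp).
  rewrite -sqrtrM ?nrm2_ge0 //; apply: le_trans (ler_norm _) _.
  rewrite -sqrtr_sqr; exact: ler_wsqrtr.
have [z|pos] := eqVneq (nrm2 p) 0.
  by rewrite z sqrtr0 mul0r in h1; rewrite z mulr0.
have Npos : 0 < nrm2 p by rewrite lt_def pos nrm2_ge0.
set r := Num.sqrt (nrm2 p).
have rpos : 0 < r by rewrite sqrtr_gt0.
have r2 : r ^+ 2 = nrm2 p by rewrite sqr_sqrtr // nrm2_ge0.
set e := r^-1 *: p.
have ne : enorm e = 1.
  rewrite enormE nrm2Z exprVn r2 mulVf ?sqrtr1 //.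
have hsup := spec_has_sup Q ne.
have he : enorm (Q *m e) <= spectral_norm Q.
  by apply: sup_upper_bound hsup _ _; exists e.
have hQe : enorm (Q *m e) = r^-1 * Num.sqrt (nrm2 Qp).
  rewrite enormE -scalemxAr nrm2Z sqrtrM ?sqr_ge0 // sqrtr_sqr ger0_norm //.
  by rewrite invr_ge0 ltW.
have h2 : Num.sqrt (nrm2 Qp) <= r * spectral_norm Q.
  rewrite hQe in he. have := ler_wpM2l (ltW rpos) he.
  by rewrite mulrA mulfV ?mul1r // gt_eqF.
apply: le_trans h1 _.
have -> : spectral_norm Q * nrm2 p = r * (r * spectral_norm Q) by rewrite -r2; ring.
rewrite -/r; apply: ler_wpM2l; [exact: ltW | exact: h2].
Qed.

End Spec.

Lemma form0 (R : realType) (n : nat) (P : 'M[R]_n) : form P 0 0 = 0.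
Proof. by rewrite /form !mulmx0 mxE. Qed.

Lemma formB (R : realType) (n : nat) (Q : 'M[R]_n) m p q :
  form (Q - m%:M) p q = form Q p q - m * (p^T *m q) 0 0.
Proof.
rewrite /form mulmxBr mulmxBl mul_mx_scalar -scalemxAl.
set A := p^T *m Q *m q; set B := p^T *m q; by rewrite !mxE.
Qed.

Lemma dot_self (R : realType) (n : nat) (p : 'cV[R]_n) : (p^T *m p) 0 0 = nrm2 p.
Proof. rewrite mxE; apply: eq_bigr => i _; by rewrite mxE expr2. Qed.

Lemma eig_bound (R : realType) (n : nat) (Q : 'M[R]_n) (mu : R) (p : 'cV[R]_n) :
  Q^T = Q -> is_posdef Q -> smallest_eigenvalue Q mu -> mu * nrm2 p <= form Q p p.
Proof.
move=> hsym hpd [heig hmin].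
have psd : forall q, 0 <= form Q q q.
  move=> q; have [->|qn0] := eqVneq q 0; first by rewrite form0.
  exact: ltW (hpd q qn0).
case: n Q p hsym hpd heig hmin psd => [|n] Q p hsym hpd heig hmin psd.
  by rewrite /nrm2 big_ord0 mulr0.
pose E := [set l : R | forall q : 'cV[R]_n.+1, l * nrm2 q <= form Q q q]%classic.
have E0 : E 0 by move=> q; rewrite mul0r.
pose e0 : 'cV[R]_n.+1 := \col_i (i == ord0)%:R.
have ne0 : nrm2 e0 = 1.
  rewrite /nrm2 (bigD1 ord0) //= big1 ?addr0; first by rewrite mxE eqxx expr1n.
  by move=> i /negbTE hi; rewrite mxE hi expr0n.
have hsup : has_sup E.
  split; first by exists 0.
  by exists (form Q e0 e0) => l El; have := El e0; rewrite ne0 mulr1.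
pose m := sup E.
have hm : forall q, m * nrm2 q <= form Q q q.
  move=> q; have [z|qn] := eqVneq (nrm2 q) 0; first by rewrite z mulr0.
  have Npos : 0 < nrm2 q by rewrite lt_def qn nrm2_ge0.
  rewrite -ler_pdivlMr //; apply: ge_sup; first by exists 0.
  by move=> l El; rewrite ler_pdivlMr //.
set P := Q - m%:M.
have hPsym : P^T = P by rewrite /P linearB /= tr_scalar_mx hsym.
have hPpsd : forall q, 0 <= form P q q.
  by move=> q; rewrite /P formB dot_self subr_ge0.
have hdet : \det P == 0.
  apply/negPn/negP => hdet.
  have hunit : P \in unitmx by rewrite unitmxE unitfE.
  set X := invmx P.
  pose MX := \sum_i \sum_j `|X i j| + 1.
  have MXpos : 0 < MX.
    rewrite /MX ltr_pwDr // sumr_ge0 // => i _; apply: sumr_ge0 => j _; exact: normr_ge0.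
  have key : forall q, nrm2 q <= form P q q * MX.
    move=> q; set N := nrm2 q.
    have [z|qn] := eqVneq N 0.
      by rewrite z; apply: mulr_ge0 => //; exact: ltW.
    have Npos : 0 < N by rewrite lt_def qn nrm2_ge0.
    set yv := X *m q.
    have cs := CS_psd q yv hPsym hPpsd.
    have e1 : form P q yv = N.
      by rewrite /form /yv mulmxA -(mulmxA _ P X) mulmxV // mulmx1 dot_self.
    have e2 : form P yv yv = (yv^T *m q) 0 0.
      by rewrite /form {2}/yv -mulmxA (mulmxA P X) mulmxV // mul1mx.
    have b2 : form P yv yv <= MX * N.
      rewrite e2 mxE /MX mulrDl mul1r; apply: ler_wpDr; first exact: nrm2_ge0.
      rewrite mulr_suml; apply: ler_sum => i _; rewrite !mxE !mulr_suml.
      apply: ler_sum => j _.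
      rewrite -mulrA; apply: prod_bound; exact: nrm2_entry.
    rewrite e1 in cs.
    have fq0 := hPpsd q.
    have : N ^+ 2 <= form P q q * (MX * N).
      apply: le_trans cs _; apply: ler_wpM2l => //.
    by rewrite expr2 mulrA ler_pM2r.
  have : E (m + MX^-1).
    move=> q; have := key q; have := hPpsd q.
    rewrite /P formB dot_self => h1 h2.
    rewrite mulrDl; rewrite -ler_pdivrMr // in h2.
    rewrite [MX^-1 * _]mulrC. lra.
  move=> /(sup_upper_bound hsup) hle.
  have : 0 < MX^-1 by rewrite invr_gt0.
  rewrite -/m in hle. lra.
have hm_eig : eigenvalue Q m.
  apply/eigenvalueP; have [v vn0 hv] := det0P hdet.
  exists v => //; apply/eqP; rewrite -subr_eq0 -mul_mx_scalar -mulmxBr; exact/eqP.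
have := hmin m hm_eig => hmum.
apply: le_trans (hm p); apply: ler_wpM2r => //; exact: nrm2_ge0.
Qed.

Lemma term_id (R : realType) (yi xi dti ui vi si ti wi wbi a b qy qx : R) :
  qy = - dti - ui - vi -> qx = - dti - si - ti ->
  a + b = qy - qx -> wi + wbi = yi - xi ->
  ((wbi = 0 /\ si = 0 /\ ti = 0) \/ (wi = 0 /\ (yi - xi) * (ui + vi) = 0)) ->
  yi * qy - xi * qx + 2 * dti * (yi - xi) - wi * a + wbi * b - xi * qy + yi * qx
    - wi * b + wbi * a = 0.
Proof.
move=> -> -> hab hw [[h1 [h2 h3]]|[h1 h2]].
  have -> : b = (- dti - ui - vi) - (- dti - si - ti) - a by lra.
  have -> : wi = yi - xi by lra.
  rewrite h1 h2 h3; ring.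
have -> : b = (- dti - ui - vi) - (- dti - si - ti) - a by lra.
have -> : wbi = yi - xi by lra.
rewrite h1.
apply: (@eq_trans _ _ (-2 * ((yi - xi) * (ui + vi)))); first by ring.
by rewrite h2 mulr0.
Qed.

Definition rv (R : realType) (n : nat) (M : {set 'I_n}) (z : 'cV[R]_n) : 'cV[R]_n :=
  \col_i (if i \in M then z i 0 else 0).

Lemma rv_split (R : realType) (n : nat) (M : {set 'I_n}) (z : 'cV[R]_n) :
  rv M z + rv (~: M) z = z.
Proof. apply/matrixP => i j; rewrite !mxE !inE ord1; by case: (i \in M); rewrite ?addr0 ?add0r. Qed.

Lemma subnorm_sq (R : realType) (n : nat) (M : {set 'I_n}) (z : 'cV[R]_n) :
  subnorm M z ^+ 2 = nrm2 (rv M z).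
Proof.
rewrite sqr_sqrtr; last by apply: sumr_ge0 => i _; exact: sqr_ge0.
rewrite /nrm2 big_mkcond; apply: eq_bigr => i _; rewrite mxE.
by case: (i \in M); rewrite ?expr0n.
Qed.

Lemma enorm_sq (R : realType) (n : nat) (z : 'cV[R]_n) : enorm z ^+ 2 = nrm2 z.
Proof. by rewrite enormE sqr_sqrtr // nrm2_ge0. Qed.

Lemma JtE (R : realType) (n : nat) (Q : 'M[R]_n) (dt v : 'cV[R]_n) :
  Jt Q dt v = form Q v v / 2 + \sum_i dt i 0 * v i 0.
Proof. rewrite /Jt; congr (_ + _); rewrite mxE; apply: eq_bigr => i _; by rewrite mxE. Qed.

Lemma entry_eq (R : realType) (n : nat) (Q : 'M[R]_n) (dt x s t : 'cV[R]_n) i :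
  Q *m x + dt + s + t = 0 -> (Q *m x) i 0 = - dt i 0 - s i 0 - t i 0.
Proof.
move=> h; have := congr1 (fun M : 'cV[R]_n => M i 0) h; rewrite /=.
set QX := Q *m x; rewrite !mxE => e; lra.
Qed.

Unset Implicit Arguments. Set Strict Implicit.

Theorem mainTheorem4 (R : realType) (n : nat) (Q : 'M[R]_n) (mu : R)
  (dt a b : 'cV[R]_n) (A B : {set 'I_n}) (x s t y u v : 'cV[R]_n) :
  is_symmetric Q -> is_posdef Q -> smallest_eigenvalue Q mu -> 0 < mu ->
  (forall i, b i 0 <= a i 0) ->
  [disjoint A & B] ->
  is_KKT Q dt a b A B x s t ->
  let C := [set i | (x i 0 < b i 0) || (s i 0 < 0)] in
  let D := [set i | (x i 0 > a i 0) || (t i 0 > 0)] in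
  is_KKT Q dt a b C D y u v ->
  let I := ~: (A :|: B) in
  let S := [set i in A | s i 0 >= 0] in
  let T := [set i in B | t i 0 <= 0] in
  let U := [set i in I | x i 0 < b i 0] in
  let V := [set i in I | x i 0 > a i 0] in
  let W := U :|: V in
  let Wbar := ~: W in
  let Rs := I :\: W in
  let K := [set i in S :|: T :|: Rs | y i 0 < b i 0] in
  let L := [set i in S :|: T :|: Rs | y i 0 > a i 0] in
  let z := y - x in
  forall c d : R, 0 <= c -> 0 <= d ->
  2 * (Lcd Q dt a b c d y u v - Lcd Q dt a b c d x s t) <=
    spectral_norm Q * subnorm W z ^+ 2 - mu * subnorm Wbar z ^+ 2
    + c * subnorm K z ^+ 2 + d * subnorm L z ^+ 2
    - c * subnorm U z ^+ 2 - d * subnorm V z ^+ 2.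
Proof.
move=> hsym hpd heig mupos hba hAB [hxA hxB hsA htB hKx] C D [hyC hyD huC hvD hKy].
move=> I S T U V W Wbar Rs K L z c d c0 d0.
have hdis i : ~~ ((i \in A) && (i \in B)).
  by apply/negP => /andP [h1 h2]; rewrite (disjointFr hAB h1) in h2.
have hyC' i : (x i 0 < b i 0) || (s i 0 < 0) -> y i 0 = b i 0.
  by move=> h; apply: hyC; rewrite inE.
have hyD' i : (a i 0 < x i 0) || (0 < t i 0) -> y i 0 = a i 0.
  by move=> h; apply: hyD; rewrite inE.
have huC' i : ~~ ((x i 0 < b i 0) || (s i 0 < 0)) -> u i 0 = 0.
  by move=> h; apply: huC; rewrite inE.
have hvD' i : ~~ ((a i 0 < x i 0) || (0 < t i 0)) -> v i 0 = 0.
  by move=> h; apply: hvD; rewrite inE.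
have memU i : (i \in U) = ~~ ((i \in A) || (i \in B)) && (x i 0 < b i 0).
  by rewrite /U /I !inE.
have memV i : (i \in V) = ~~ ((i \in A) || (i \in B)) && (a i 0 < x i 0).
  by rewrite /V /I !inE.
have memW i : (i \in W) = ~~ ((i \in A) || (i \in B)) && (x i 0 < b i 0)
   || ~~ ((i \in A) || (i \in B)) && (a i 0 < x i 0).
  by rewrite /W /U /V /I !inE.
have memK i : (i \in K) = ((i \in A) && (0 <= s i 0) || (i \in B) && (t i 0 <= 0)
     || ~~ (~~ ((i \in A) || (i \in B)) && (x i 0 < b i 0)
            || ~~ ((i \in A) || (i \in B)) && (a i 0 < x i 0)) &&
        ~~ ((i \in A) || (i \in B))) && (y i 0 < b i 0).
  by rewrite /K /S /T /Rs /W /U /V /I !inE.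
have memL i : (i \in L) = ((i \in A) && (0 <= s i 0) || (i \in B) && (t i 0 <= 0)
     || ~~ (~~ ((i \in A) || (i \in B)) && (x i 0 < b i 0)
            || ~~ ((i \in A) || (i \in B)) && (a i 0 < x i 0)) &&
        ~~ ((i \in A) || (i \in B))) && (a i 0 < y i 0).
  by rewrite /L /S /T /Rs /W /U /V /I !inE.
have zE i : z i 0 = y i 0 - x i 0 by rewrite /z !mxE.
have Fgx : enorm (gfun b x) ^+ 2 = subnorm U z ^+ 2.
  rewrite enorm_sq subnorm_sq /nrm2; apply: eq_bigr => i _.
  rewrite /gfun /rv !mxE (P3 (hba i) (hdis i) (hxA i) (hxB i) (hsA i) (htB i) (hyC' i) (hyD' i) (huC' i) (hvD' i)).
  by rewrite memU ?zE; case: ifP => _; rewrite ?expr0n.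
have Fhx : enorm (hfun a x) ^+ 2 = subnorm V z ^+ 2.
  rewrite enorm_sq subnorm_sq /nrm2; apply: eq_bigr => i _.
  rewrite /hfun /rv !mxE (P4 (hba i) (hdis i) (hxA i) (hxB i) (hsA i) (htB i) (hyC' i) (hyD' i) (huC' i) (hvD' i)).
  by rewrite memV ?zE; case: ifP => _; rewrite ?expr0n.
have Fgy : enorm (gfun b y) ^+ 2 <= subnorm K z ^+ 2.
  rewrite enorm_sq subnorm_sq /nrm2; apply: ler_sum => i _.
  have := P5 (hba i) (hdis i) (hxA i) (hxB i) (hsA i) (htB i) (hyC' i) (hyD' i) (huC' i) (hvD' i).
  rewrite /gfun /rv !mxE memK ?zE; by case: ifP => _; rewrite ?expr0n.
have Fhy : enorm (hfun a y) ^+ 2 <= subnorm L z ^+ 2.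
  rewrite enorm_sq subnorm_sq /nrm2; apply: ler_sum => i _.
  have := P6 (hba i) (hdis i) (hxA i) (hxB i) (hsA i) (htB i) (hyC' i) (hyD' i) (huC' i) (hvD' i).
  rewrite /hfun /rv !mxE memL ?zE; by case: ifP => _; rewrite ?expr0n.
set zW := rv W z.
set zWb := rv Wbar z.
have hsplit : zW + zWb = y - x by exact: rv_split.
have E3 i : (Q *m zW) i 0 + (Q *m zWb) i 0 = (Q *m y) i 0 - (Q *m x) i 0.
  have := congr1 (fun M : 'cV[R]_n => (Q *m M) i 0) hsplit; rewrite /= mulmxDr mulmxBr.
  set A1 := Q *m zW; set A2 := Q *m zWb; set A3 := Q *m y; set A4 := Q *m x.
  by rewrite !mxE.
have E4 i : zW i 0 + zWb i 0 = y i 0 - x i 0.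
  have := congr1 (fun M : 'cV[R]_n => M i 0) hsplit; rewrite /=.
  rewrite [LHS]mxE [RHS]mxE => h; by rewrite h mxE.
have Ecase i : (zWb i 0 = 0 /\ s i 0 = 0 /\ t i 0 = 0) \/
               (zW i 0 = 0 /\ (y i 0 - x i 0) * (u i 0 + v i 0) = 0).
  case hW: (i \in W).
    left; have [h1 h2] := K1 (hba i) (hdis i) (hxA i) (hxB i) (hsA i) (htB i) (hyC' i) (hyD' i) (huC' i) (hvD' i) (etrans (esym (memW i)) hW).
    by rewrite /zWb /rv mxE /Wbar inE hW.
  right; have := K2 (hba i) (hdis i) (hxA i) (hxB i) (hsA i) (htB i) (hyC' i) (hyD' i) (huC' i) (hvD' i).
  rewrite -memW hW => /(_ isT) [->|[-> ->]]; rewrite /zW /rv mxE hW; split => //.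
    by rewrite subrr mul0r.
  by rewrite addr0 mulr0.
have sum0 : \sum_i (y i 0 * (Q *m y) i 0 - x i 0 * (Q *m x) i 0
    + 2 * dt i 0 * (y i 0 - x i 0) - zW i 0 * (Q *m zW) i 0 + zWb i 0 * (Q *m zWb) i 0
    - x i 0 * (Q *m y) i 0 + y i 0 * (Q *m x) i 0
    - zW i 0 * (Q *m zWb) i 0 + zWb i 0 * (Q *m zW) i 0) = 0.
  apply: big1 => i _.
  exact: term_id (entry_eq i hKy) (entry_eq i hKx) (E3 i) (E4 i) (Ecase i).
rewrite !big_split /= !sumrN in sum0.
have hdsum : \sum_i 2 * dt i 0 * (y i 0 - x i 0) =
    2 * (\sum_i dt i 0 * y i 0 - \sum_i dt i 0 * x i 0).
  by rewrite -sumrB mulr_sumr; apply: eq_bigr => i _; ring.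
have f1 := formE Q y y. have f2 := formE Q x x. have f3 := formE Q zW zW.
have f4 := formE Q zWb zWb. have f5 := formE Q x y. have f6 := formE Q y x.
have f7 := formE Q zW zWb. have f8 := formE Q zWb zW.
have s1 := form_sym x y hsym. have s2 := form_sym zW zWb hsym.
have FJ : 2 * (Jt Q dt y - Jt Q dt x) = form Q zW zW - form Q zWb zWb.
  rewrite !JtE. lra.
have Fup := spec_bound Q zW.
have Flo := eig_bound zWb hsym hpd heig.
have sW : subnorm W z ^+ 2 = nrm2 zW := subnorm_sq W z.
have sWb : subnorm Wbar z ^+ 2 = nrm2 zWb := subnorm_sq Wbar z.
have hc1 := ler_wpM2l c0 Fgy.
have hd1 := ler_wpM2l d0 Fhy.
rewrite /Lcd Fgx Fhx sW sWb.
lra.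
Qed.
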